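(* Let $G=(V,E)$ be a finite simple strongly connected directed graph with a fixed total order on $V$, let $W\subseteq V$ be strongly connected, $w\in W$, and let $\mathbf b$ be a spanning tree of $G$ rooted at $w$ with $\psi(\mathbf b)=W$. Let $\mathbf f$ be the set of edges of $\mathbf b$ whose source is not in $W$, and let $\mathfrak E$ be the set of vertices erased when running the exploration algorithm on $\mathbf b$. For each $u\in\mathfrak E$, let $e(u)$ be the edge (with source $u$, not in $\mathbf b$) whose processing caused $u$ to be erased. For $\mathfrak F\subseteq\mathfrak E$, let $\mathbf f_{\mathfrak F}$ be obtained from $\mathbf f$ by replacing, for each $u\in\mathfrak F$, the edge of $\mathbf f$ going out of $u$ by $e(u)$. Then for every $\mathfrak F\subseteq\mathfrak E$, $\mathbf f_{\mathfrak F}$ is a forest rooted in $W$.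
   Context: A spanning tree of $G$ is a subgraph on all vertices with no cycle, one vertex (root) of outdegree $0$ and all others of outdegree $1$. For nonempty $U\subseteq V$, a forest rooted in $U$ is a subgraph on all vertices with no cycle in which vertices of $U$ have outdegree $0$ and all others outdegree $1$. Exploration algorithm (depends on the fixed total order of $V$). Input: a spanning tree $\mathbf a$ rooted at $v$. Initialize $A=\{v\}$, $F=\{e: s(e)\neq v\}$, $\mathbf L$ = FIFO list of edges with target $v$, by increasing source. While $\mathbf L$ is nonempty, take its first edge $e$, with source $w'$: if $e\in\mathbf a$, add $w'$ to $A$, delete from $\mathbf L$ (and $F$) all edges with source $w'$, and append to $\mathbf L$ all edges of $F$ with target $w'$ by increasing source; otherwise delete from $\mathbf L$ and $F$ all edges with source or target $w'$, and $w'$ is said to be erased (by the edge $e$). At the end $\phi(\mathbf a)=A$ and $\psi(\mathbf a)$ is the strongly connected component of $v$ in the induced graph $G_{\phi(\mathbf a)}$. *)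

(* Defs.v *)
From mathcomp Require Import all_boot.
Set Implicit Arguments. Unset Strict Implicit. Unset Printing Implicit Defensive.

Section Defs.
Variable V : finType.

(* A directed graph is given by an edge relation G : rel V; an edge is a pair
   (source, target). A subgraph on all vertices is a set of edges. *)
Definition edges (G : rel V) : {set V * V} := [set e | G e.1 e.2].

Definition outdeg (a : {set V * V}) (x : V) : nat := #|[set e in a | e.1 == x]|.

Definition acyclic (a : {set V * V}) : Prop :=
  ~ exists (x : V) (p : seq V),
      [/\ p != [::], path (fun y z => (y, z) \in a) x p & last x p = x].

Definition spanning_tree (G : rel V) (a : {set V * V}) (v : V) : Prop :=
  [/\ a \subset edges G, outdeg a v = 0,
      (forall x, x != v -> outdeg a x = 1) & acyclic a].

Definition forest_rooted (G : rel V) (a : {set V * V}) (U : {set V}) : Prop :=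
  [/\ U != set0, a \subset edges G,
      (forall x, x \in U -> outdeg a x = 0),
      (forall x, x \notin U -> outdeg a x = 1) & acyclic a].

Definition induced (G : rel V) (U : {set V}) : rel V :=
  fun x y => [&& G x y, x \in U & y \in U].

Definition strongly_connected (G : rel V) : Prop := forall x y, connect G x y.

Definition strongly_connected_set (G : rel V) (U : {set V}) : Prop :=
  forall x y, x \in U -> y \in U -> connect (induced G U) x y.

Record xstate := XState {
  xA : {set V};                      (* accepted vertices *)
  xF : {set V * V};                  (* remaining edges *)
  xL : seq (V * V);                  (* FIFO list *)
  xErased : seq (V * (V * V))        (* erased vertices with the erasing edge *)
}.

Definition in_edges_sorted (r : rel V) (F : {set V * V}) (w : V) : seq (V * V) :=
  [seq (x, w) | x <- sort r [seq x <- enum V | (x, w) \in F]].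

Definition xstep (r : rel V) (a : {set V * V}) (st : xstate) : xstate :=
  match xL st with
  | [::] => st
  | e :: L' =>
    let w' := e.1 in
    if e \in a then
      let F' := [set f in xF st | f.1 != w'] in
      XState (w' |: xA st) F'
             ([seq f <- L' | f.1 != w'] ++ in_edges_sorted r F' w')
             (xErased st)
    else
      let F' := [set f in xF st | (f.1 != w') && (f.2 != w')] in
      XState (xA st) F'
             [seq f <- L' | (f.1 != w') && (f.2 != w')]
             (rcons (xErased st) (w', e))
  end.

Definition xinit (G : rel V) (r : rel V) (v : V) : xstate :=
  let F := [set e in edges G | e.1 != v] in
  XState [set v] F (in_edges_sorted r F v) [::].

(* Each non-trivial step removes the head edge of L from F (and L is always
   contained in F), so #|V|^2 + 1 iterations reach the terminal state; further
   iterations are the identity. *)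
Definition explore (G : rel V) (r : rel V) (a : {set V * V}) (v : V) : xstate :=
  iter (#|V| * #|V|).+1 (xstep r a) (xinit G r v).

Definition phi (G : rel V) (r : rel V) (a : {set V * V}) (v : V) : {set V} :=
  xA (explore G r a v).

Definition psi (G : rel V) (r : rel V) (a : {set V * V}) (v : V) : {set V} :=
  let A := phi G r a v in
  [set u in A | connect (induced G A) v u && connect (induced G A) u v].

Definition erased (G : rel V) (r : rel V) (a : {set V * V}) (v : V) : {set V} :=
  [set u in map fst (xErased (explore G r a v))].

Definition erasing_edge (G : rel V) (r : rel V) (a : {set V * V}) (v : V) (u : V)
  : V * V :=
  let s := xErased (explore G r a v) in
  nth (u, u) (map snd s) (index u (map fst s)).

End Defs.

(* Main.v *)
Require Import Defs.
From mathcomp Require Import all_boot.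
Set Implicit Arguments. Unset Strict Implicit. Unset Printing Implicit Defensive.

Section Proofs.
Variable V : finType.
Variables (G r : rel V) (b : {set V * V}) (w : V).
Hypothesis b_tree : spanning_tree G b w.

Lemma uniq_out e1 e2 : e1 \in b -> e2 \in b -> e1.1 = e2.1 -> e1 = e2.
Proof.
case: b_tree => _ h0 h1 _ e1b e2b E.
have [xw|xw] := eqVneq e1.1 w.
  move: h0; rewrite /outdeg => /eqP; rewrite cards_eq0 => /eqP/setP/(_ e1).
  by rewrite !inE e1b xw eqxx.
move: (h1 _ xw); rewrite /outdeg => /eqP/cards1P [e0 /setP H].
move: (H e1) (H e2); rewrite !inE e1b e2b E eqxx /= => /esym/eqP -> /esym/eqP ->.
by [].
Qed.

Lemma in_edges_mem F x f : f \in in_edges_sorted r F x -> f \in F /\ f.2 = x.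
Proof.
by case/mapP => y; rewrite mem_sort mem_filter => /andP [yin _] ->.
Qed.

Record Inv (st : xstate V) : Prop := {
  iLF : forall e, e \in xL st -> e \in xF st;
  iFE : forall e, e \in xF st -> G e.1 e.2;
  iLA : forall e, e \in xL st -> e.2 \in xA st;
  iFA : forall e, e \in xF st -> e.1 \notin xA st;
  iCl : forall x y, x \in xA st -> (x, y) \in b -> y \in xA st;
  iEr : forall u e, (u, e) \in xErased st ->
     [/\ e.1 = u, G e.1 e.2, e.2 \in xA st, u \notin xA st &
         forall f, f \in xF st -> f.1 != u]
}.

Lemma Inv_init : Inv (xinit G r w).
Proof.
split => /=.
- by move=> e /in_edges_mem [].
- by move=> e; rewrite !inE => /andP [].
- by move=> e /in_edges_mem [_ ->]; rewrite inE.
- by move=> e; rewrite !inE => /andP [].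
- move=> x y; rewrite inE => /eqP -> wyb.
  case: b_tree => _ h0 _ _; move: h0; rewrite /outdeg => /eqP.
  by rewrite cards_eq0 => /eqP/setP/(_ (w, y)); rewrite !inE wyb eqxx.
- by [].
Qed.

Lemma Inv_step st : Inv st -> Inv (xstep r b st).
Proof.
case: st => A F L Er [/= LF FE LA FA Cl ErP].
rewrite /xstep /=; case: L LF LA => [|e L'] LF LA; first by split.
have eF : e \in F by apply: LF; rewrite inE eqxx.
have eA : e.2 \in A by apply: LA; rewrite inE eqxx.
have e1A : e.1 \notin A by apply: FA.
case: ifP => eb; split => /=.
- move=> f; rewrite mem_cat mem_filter => /orP [/andP [fne fL]|/in_edges_mem [] //].
  by rewrite inE fne LF // inE fL orbT.
- by move=> f; rewrite inE => /andP [/FE].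
- move=> f; rewrite mem_cat mem_filter => /orP [/andP [fne fL]|/in_edges_mem [_ ->]].
    by rewrite !inE LA ?orbT // inE fL orbT.
  by rewrite !inE eqxx.
- by move=> f; rewrite !inE => /andP [/FA fA fne]; rewrite negb_or fne fA.
- move=> x y; rewrite !inE => /orP [/eqP ->|xA] xyb; last by rewrite (Cl x) ?orbT.
  have -> : y = e.2 by rewrite -(uniq_out xyb eb).
  by rewrite eA orbT.
- move=> u e0 /ErP [h1 h2 h3 h4 h5]; split => //.
  + by rewrite !inE h3 orbT.
  + by rewrite !inE negb_or h4 andbT eq_sym h5.
  + by move=> f; rewrite inE => /andP [/h5].
- move=> f; rewrite mem_filter => /andP [fne fL].
  by rewrite inE fne LF // inE fL orbT.
- by move=> f; rewrite inE => /andP [/FE].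
- move=> f; rewrite mem_filter => /andP [_ fL]; by rewrite LA // inE fL orbT.
- by move=> f; rewrite !inE => /andP [/FA].
- exact: Cl.
- move=> u e0; rewrite mem_rcons inE => /orP [/eqP [-> ->]|/ErP [h1 h2 h3 h4 h5]].
    split => //; first exact: FE.
    by move=> f; rewrite inE => /andP [_ /andP []].
  split => //.
  by move=> f; rewrite inE => /andP [/h5].
Qed.

Lemma Inv_explore : Inv (explore G r b w).
Proof.
rewrite /explore; elim: _.+1 => [|n IH] /=; first exact: Inv_init.
exact: Inv_step.
Qed.

End Proofs.

Theorem lemma4p4 (V : finType) (G : rel V) (r : rel V)
    (G_irr : irreflexive G) (G_sc : strongly_connected G)
    (r_total : total r) (r_trans : transitive r) (r_anti : antisymmetric r)
    (W : {set V}) (W_sc : strongly_connected_set G W)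
    (w : V) (wW : w \in W)
    (b : {set V * V}) (b_tree : spanning_tree G b w)
    (b_psi : psi G r b w = W) :
  let f := [set e in b | e.1 \notin W] in
  forall Fr : {set V}, Fr \subset erased G r b w ->
    forest_rooted G
      ([set e in f | e.1 \notin Fr] :|: [set erasing_edge G r b w u | u in Fr])
      W.
Proof.
move=> f Fr FrE.
have [_ _ _ _ Cl ErP] := Inv_explore r b_tree.
set st := explore G r b w in Cl ErP.
set A := xA st in Cl ErP.
set Er := xErased st in ErP.
set E := erasing_edge G r b w.
have WA : W \subset A.
  by apply/subsetP => x; rewrite -b_psi /psi inE => /andP [].
have EP u : u \in Fr -> [/\ (E u).1 = u, G (E u).1 (E u).2, (E u).2 \in A & u \notin A].
  move=> /(subsetP FrE); rewrite /erased inE => uin.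
  have ilt : index u (map fst Er) < size Er by rewrite -(size_map fst) index_mem.
  have Hin : (u, E u) \in Er.
    have -> : (u, E u) = nth (u, (u, u)) Er (index u (map fst Er)).
      rewrite /E /erasing_edge -/st -/Er (nth_map (u, (u, u))) //.
      rewrite -{1}(nth_index u uin) (nth_map (u, (u, u))) //.
      by case: (nth _ _ _).
    exact: mem_nth.
  by case: (ErP _ _ Hin).
have FrW u : u \in Fr -> u \notin W.
  by move=> /EP [_ _ _ uA]; apply: contra uA; apply: (subsetP WA).
set a := _ :|: _.
have aP e : e \in a -> e.1 \notin W /\ (if e.1 \in Fr then e = E e.1 else e \in b).
  rewrite !inE => /orP [/andP [/andP [eb eW] eF]|/imsetP [u uF ->]].
    by rewrite (negbTE eF).
  by have [-> _ _ _] := EP u uF; rewrite uF FrW.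
have ab e : e \in a -> e.1 \in A \/ e.2 \notin A -> e \in b.
  move=> /aP [_]; case: ifP => // eF -> H.
  have [h1 _ h3 h4] := EP _ eF.
  by move: H; rewrite h1 (negbTE h4) h3 => -[].
split.
- by apply/set0Pn; exists w.
- apply/subsetP => e /aP [_]; case: ifP => [eF ->|_ eb].
    by have [_ h _ _] := EP _ eF; rewrite inE.
  by case: b_tree => /subsetP sb _ _ _; apply: sb.
- move=> x xW; apply/eqP; rewrite cards_eq0; apply/eqP/setP => e.
  rewrite in_set in_set0; apply/negP => /andP [/aP [eW _] /eqP ex].
  by move: eW; rewrite ex xW.
- move=> x xW; apply/eqP/cards1P.
  have xw : x != w by apply: contraNneq xW => ->.
  case: b_tree => _ _ h1 _; move: (h1 _ xw); rewrite /outdeg => /eqP/cards1P [e0 /setP H0].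
  have e0b : e0 \in b /\ e0.1 = x by move: (H0 e0); rewrite !inE eqxx => /andP [? /eqP].
  case xF : (x \in Fr).
    exists (E x); apply/setP => e; rewrite in_set in_set1.
    apply/andP/eqP => [[/aP [_] + /eqP ex]|->].
      by rewrite ex xF => ->.
    have [hE1 _ _ _] := EP _ xF; split; last by rewrite hE1.
    by rewrite /a inE; apply/orP; right; apply/imsetP; exists x.
  exists e0; apply/setP => e; rewrite in_set in_set1.
  apply/andP/eqP => [[/aP [_] + /eqP ex]|->].
    rewrite ex xF => eb.
    by move: (H0 e); rewrite !inE eb ex eqxx => /esym/eqP.
  case: e0b => e0b e0x; split; last by rewrite e0x.
  by rewrite /a !inE e0b e0x xW xF.
-
  have step y z : (y, z) \in a -> y \in A -> z \in A.
    move=> yza yA; apply: (Cl y) => //; apply: ab => //; by left.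
  have L1 : forall x p, x \in A -> path (fun y z => (y, z) \in a) x p ->
      path (fun y z => (y, z) \in b) x p.
    move=> x p; elim: p x => [//|z p IH] x xA /= /andP [xz pp].
    rewrite (ab (x, z)) //=; last by left.
    exact: IH (step _ _ xz xA) pp.
  have L2 : forall x p, all (fun y => y \notin A) p ->
      path (fun y z => (y, z) \in a) x p -> path (fun y z => (y, z) \in b) x p.
    move=> x p; elim: p x => [//|z p IH] x /= /andP [zA pA] /andP [xz pp].
    rewrite (ab (x, z)) //=; last by right.
    exact: IH pA pp.
  have L3 : forall x p, x \in A -> path (fun y z => (y, z) \in a) x p -> last x p \in A.
    move=> x p; elim: p x => [//|z p IH] x xA /= /andP [xz pp].
    exact: IH (step _ _ xz xA) pp.
  case: b_tree => _ _ _ bac.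
  move=> [x [p [pn pp lp]]]; apply: bac; exists x, p; split => //.
  have [xA|xA] := boolP (x \in A); first exact: L1.
  refine (L2 _ _ _ pp); apply/allP => z zp; apply/negP => zA.
  move: pp lp; case/splitPr: zp => p1 p2.
  rewrite cat_path last_cat /= => /andP [_ /andP [_ pp2]] lp.
  by move: (L3 _ _ zA pp2); rewrite lp (negbTE xA).
Qed.
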